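(* Let $c$ be the ellipse $x^2/a_c^2+y^2/b_c^2=1$ with $a_c>b_c>0$, linear eccentricity $d=\sqrt{a_c^2-b_c^2}$ and numerical eccentricity $m=d/a_c$, and let $\mathrm{sn},\mathrm{cn},\mathrm{dn}$ denote the Jacobian elliptic functions with modulus $m$ and $K$ the complete elliptic integral of the first kind with modulus $m$. \begin{enumerate} \item For every ellipse $e$ with semiaxes $(a_e,b_e)$ confocal with $c$ and exterior to it, the billiards in $e$ with caustic $c$ are canonically parametrized by $\tilde u\mapsto(-a_e\,\mathrm{sn}\,\tilde u,\ b_e\,\mathrm{cn}\,\tilde u)$ in the following sense: if $\Delta\tilde u$ satisfies $b_c=b_e\,\mathrm{cn}(\Delta\tilde u)$, then for any initial value $\tilde u_0$ the vertices of the billiard in $e$ with caustic $c$ starting at the point with parameter $\tilde u_0$ have the parameters $\tilde u_0+2k\Delta\tilde u$, $k\in\mathbb Z$. \item Conversely, let $N\ge 3$ and $\tau\ge1$ be integers with $\gcd(N,\tau)=1$ and $2\tau<N$, and put $\Delta\tilde u=\frac{2\tau K}{N}$. If \[a_e=\frac{a_c\,\mathrm{dn}(\Delta\tilde u)}{\mathrm{cn}(\Delta\tilde u)},\qquad b_e=\frac{b_c}{\mathrm{cn}(\Delta\tilde u)},\] then the ellipse $e$ with semiaxes $(a_e,b_e)$ is confocal with $c$ and the billiards in $e$ with caustic $c$ are $N$-periodic with turning number $\tau$. \end{enumerate}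
   Context: Confocal conics of $c$: $\frac{x^2}{a_c^2+k}+\frac{y^2}{b_c^2+k}=1$. An ellipse $e$ confocal with $c$ and exterior to it has semiaxes $a_e^2=a_c^2+k_e$, $b_e^2=b_c^2+k_e$ with $k_e>0$. A billiard in $e$ with caustic $c$ is a sequence of points $P_1,P_2,\dots$ on $e$ such that each line $P_iP_{i+1}$ is tangent to $c$ and $P_{i-1}P_i$, $P_iP_{i+1}$ are the two tangents from $P_i$ to $c$; it is traversed counterclockwise. It is $N$-periodic if $P_{i+N}=P_i$ for all $i$; its turning number $\tau$ is the number of times one period of the billiard winds around the center of $e$. The modulus convention: $\tilde u=\int_0^{\varphi}\frac{d\psi}{\sqrt{1-m^2\sin^2\psi}}$, $\mathrm{sn}\,\tilde u=\sin\varphi$, $\mathrm{cn}\,\tilde u=\cos\varphi$, $\mathrm{dn}\,\tilde u=\sqrt{1-m^2\mathrm{sn}^2\tilde u}$, $K=\int_0^{\pi/2}\frac{d\psi}{\sqrt{1-m^2\sin^2\psi}}$. *)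

(* Defs.v *)
From Stdlib Require Import Reals Lra ZArith ClassicalEpsilon.
From Coquelicot Require Import Coquelicot.
Open Scope R_scope.

Definition ellF (m phi : R) : R :=
  RInt (fun psi => / sqrt (1 - m ^ 2 * (sin psi) ^ 2)) 0 phi.

(** amplitude: the inverse function of ellF (well defined for 0 <= m < 1,
    where ellF m is a strictly increasing bijection R -> R). *)
Definition am (m u : R) : R :=
  epsilon (inhabits 0) (fun phi => ellF m phi = u).

Definition sn (m u : R) : R := sin (am m u).
Definition cn (m u : R) : R := cos (am m u).
Definition dn (m u : R) : R := sqrt (1 - m ^ 2 * (sn m u) ^ 2).
Definition ellK (m : R) : R := ellF m (PI / 2).

Definition point := (R * R)%type.

Definition on_ellipse (a b : R) (P : point) : Prop :=
  (fst P) ^ 2 / a ^ 2 + (snd P) ^ 2 / b ^ 2 = 1.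

Definition on_line (P Q X : point) : Prop :=
  exists t : R, X = (fst P + t * (fst Q - fst P), snd P + t * (snd Q - snd P)).

Definition tangent_line (a b : R) (P Q : point) : Prop :=
  P <> Q /\ exists! X : point, on_ellipse a b X /\ on_line P Q X.

Definition det2 (P Q : point) : R := fst P * snd Q - snd P * fst Q.

(** Billiard in the ellipse e = (ae,be) with caustic c = (ac,bc), indexed by Z:
    all P i lie on e, each line P i P (i+1) is tangent to c, the lines
    P (i-1) P i and P i P (i+1) are the two (distinct) tangents from P i to c,
    and it is traversed counterclockwise (each step turns positively about the
    common center). *)
Definition billiard (ae be ac bc : R) (P : Z -> point) : Prop :=
  (forall i : Z, on_ellipse ae be (P i)) /\
  (forall i : Z, tangent_line ac bc (P i) (P (i + 1)%Z)) /\
  (forall i : Z, ~ on_line (P (i - 1)%Z) (P i) (P (i + 1)%Z)) /\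
  (forall i : Z, 0 < det2 (P i) (P (i + 1)%Z)).

Definition periodic (N : nat) (P : Z -> point) : Prop :=
  forall i : Z, P (i + Z.of_nat N)%Z = P i.

Definition vnorm (P : point) : R := sqrt (fst P ^ 2 + snd P ^ 2).

(** unoriented angle between the position vectors of P and Q, in [0, pi];
    for a counterclockwise step it is the increment of the polar angle *)
Definition angle (P Q : point) : R :=
  acos ((fst P * fst Q + snd P * snd Q) / (vnorm P * vnorm Q)).

Fixpoint swept (P : Z -> point) (n : nat) : R :=
  match n with
  | O => 0
  | S k => swept P k + angle (P (Z.of_nat k)) (P (Z.of_nat k + 1)%Z)
  end.

Definition turning_number (N tau : nat) (P : Z -> point) : Prop :=
  swept P N = 2 * PI * INR tau.

Definition param (m ae be u : R) : point := (- ae * sn m u, be * cn m u).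

(* Main.v *)
Require Import Defs.
From Stdlib Require Import Reals ZArith Arith Lra Psatz Nsatz ClassicalEpsilon Ranalysis5.
From Coquelicot Require Import Coquelicot.
Open Scope R_scope.


Definition Dl (m x : R) := sqrt (1 - m ^ 2 * (sin x) ^ 2).
Definition fint (m x : R) := / sqrt (1 - m ^ 2 * (sin x) ^ 2).

Section Ell.
Variable m : R.
Hypothesis Hm : 0 <= m < 1.

Lemma rad_pos x : 0 < 1 - m ^ 2 * (sin x) ^ 2.
Proof.
  pose proof (SIN_bound x). assert (0 <= sin x ^2 <= 1) by nra. nra.
Qed.

Lemma Dl_pos x : 0 < Dl m x.
Proof. apply sqrt_lt_R0, rad_pos. Qed.

Lemma Dl_le1 x : Dl m x <= 1.
Proof.
  unfold Dl. rewrite <- sqrt_1 at 2. apply sqrt_le_1_alt.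
  pose proof (pow2_ge_0 (sin x)). pose proof (pow2_ge_0 m). nra.
Qed.

Lemma fint_ex_derive x : ex_derive (fint m) x.
Proof.
  unfold fint. auto_derive. split. apply rad_pos. split; auto.
  apply Rgt_not_eq, sqrt_lt_R0, rad_pos.
Qed.

Lemma fint_cont x : continuous (fint m) x.
Proof. apply (ex_derive_continuous (K:=R_AbsRing) (V:=R_NormedModule)), fint_ex_derive. Qed.

Lemma ellF_ex a b : ex_RInt (fint m) a b.
Proof. apply (ex_RInt_continuous (V:=R_CompleteNormedModule)). intros; apply fint_cont. Qed.

Lemma ellF_derive x : is_derive (ellF m) x (fint m x).
Proof.
  apply (is_derive_RInt (fint m) (ellF m) 0 x).
  apply filter_forall. intros b. apply (RInt_correct (V:=R_CompleteNormedModule)). apply ellF_ex.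
  apply fint_cont.
Qed.

Lemma fint_ge1 x : 1 <= fint m x.
Proof.
  unfold fint. fold (Dl m x). pose proof (Dl_pos x). pose proof (Dl_le1 x).
  rewrite <- Rinv_1. apply Rinv_le_contravar; lra.
Qed.

Lemma ellF_0 : ellF m 0 = 0.
Proof. unfold ellF. apply (RInt_point (V:=R_CompleteNormedModule)). Qed.

Lemma deriv0_const (g : R -> R) : (forall x, is_derive g x 0) -> forall a b, g a = g b.
Proof.
  intros H a b.
  destruct (MVT_gen g a b (fun _ => 0)) as [c [_ Hc]].
  intros; apply H.
  intros; apply continuity_pt_filterlim. apply (ex_derive_continuous (K:=R_AbsRing) (V:=R_NormedModule)). eexists; apply H.
  lra.
Qed.

Lemma ellF_diff a b : a <= b -> b - a <= ellF m b - ellF m a.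
Proof.
  intros Hab.
  destruct (MVT_gen (ellF m) a b (fint m)) as [c [_ Hc]].
  intros; apply ellF_derive.
  intros; apply continuity_pt_filterlim. apply (ex_derive_continuous (K:=R_AbsRing) (V:=R_NormedModule)). eexists; apply ellF_derive.
  rewrite Hc. pose proof (fint_ge1 c). nra.
Qed.

End Ell.


Section Ell2.
Variable m : R.
Hypothesis Hm : 0 <= m < 1.

Lemma is_derive_eq (f : R -> R) x l l' : is_derive f x l -> l = l' -> is_derive f x l'.
Proof. intros; subst; auto. Qed.

Lemma ellF_lin_derive a b x :
  is_derive (fun x => ellF m (a * x + b)) x (a * fint m (a * x + b)).
Proof.
  pose proof (is_derive_comp (ellF m) (fun x => a * x + b) x _ a (ellF_derive m Hm (a*x+b))) as H.
  apply H. auto_derive; auto; ring.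
Qed.

Lemma fint_neg x : fint m (- x) = fint m x.
Proof. unfold fint. rewrite sin_neg. f_equal. f_equal. ring. Qed.

Lemma fint_pi x : fint m (x + PI) = fint m x.
Proof. unfold fint. rewrite neg_sin. f_equal. f_equal. ring. Qed.

Lemma ellF_odd x : ellF m (- x) = - ellF m x.
Proof.
  assert (H : forall y, is_derive (fun x => ellF m (-1 * x + 0) + ellF m (1 * x + 0)) y 0).
  { intros y. 
    pose proof (is_derive_plus _ _ y _ _ (ellF_lin_derive (-1) 0 y) (ellF_lin_derive 1 0 y)) as H.
    apply (is_derive_eq _ _ _ _ H).
    { unfold plus; simpl. replace (-1 * y + 0) with (- (1*y+0)) by ring. rewrite fint_neg. ring. }
}
  pose proof (deriv0_const _ H x 0). simpl in H0.
  replace (-1 * x + 0) with (-x) in H0 by ring. replace (1 * x + 0) with x in H0 by ring.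
  replace (-1 * 0 + 0) with 0 in H0 by ring. replace (1 * 0 + 0) with 0 in H0 by ring.
  rewrite (ellF_0 m) in H0. lra.
Qed.

Lemma ellF_pi x : ellF m (x + PI) = ellF m x + 2 * ellK m.
Proof.
  assert (H : forall y, is_derive (fun x => ellF m (1 * x + PI) + ellF m (-1 * x + 0)) y 0).
  { intros y.
    pose proof (is_derive_plus _ _ y _ _ (ellF_lin_derive 1 PI y) (ellF_lin_derive (-1) 0 y)) as H.
    apply (is_derive_eq _ _ _ _ H).
    { unfold plus; simpl. replace (-1 * y + 0) with (- (1*y+0)) by ring. rewrite fint_neg.
    replace (1 * y + PI) with ((1*y+0) + PI) by ring. rewrite fint_pi. ring. }
}
  pose proof (deriv0_const _ H x (- (PI/2))). simpl in H0.
  replace (1 * x + PI) with (x + PI) in H0 by ring. replace (-1 * x + 0) with (-x) in H0 by ring.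
  replace (1 * - (PI/2) + PI) with (PI/2) in H0 by field.
  replace (-1 * - (PI/2) + 0) with (PI/2) in H0 by field.
  rewrite ellF_odd in H0. unfold ellK. lra.
Qed.

Lemma ellF_cont : continuity (ellF m).
Proof.
  intros x. apply continuity_pt_filterlim.
  apply (ex_derive_continuous (K:=R_AbsRing) (V:=R_NormedModule)). eexists; apply (ellF_derive m Hm).
Qed.

Lemma ellF_ge x : 0 <= x -> x <= ellF m x.
Proof. intros. pose proof (ellF_diff m Hm 0 x H). rewrite ellF_0 in H0. lra. Qed.

Lemma ellF_surj u : exists phi, ellF m phi = u.
Proof.
  destruct (IVT_gen (ellF m) (- Rabs u) (Rabs u) u ellF_cont) as [x [_ Hx]].
  pose proof (ellF_ge (Rabs u) (Rabs_pos u)). rewrite ellF_odd.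
  assert (- ellF m (Rabs u) <= ellF m (Rabs u)) by (pose proof (Rabs_pos u); lra).
  rewrite Rmin_left by lra. rewrite Rmax_right by lra.
  split; [apply Rle_trans with (- Rabs u)|apply Rle_trans with (Rabs u)]; try lra.
  pose proof (Rle_abs (-u)). rewrite Rabs_Ropp in H1. lra. apply Rle_abs.
  exists x; exact Hx.
Qed.

Lemma ellF_strict a b : a < b -> ellF m a < ellF m b.
Proof. intros. pose proof (ellF_diff m Hm a b). lra. Qed.

Lemma ellF_inj a b : ellF m a = ellF m b -> a = b.
Proof.
  intros H. destruct (Rtotal_order a b) as [h|[h|h]]; auto.
  apply ellF_strict in h; lra. apply ellF_strict in h; lra.
Qed.

Lemma ellF_am u : ellF m (am m u) = u.
Proof.
  unfold am. apply (epsilon_spec (inhabits 0) (fun phi => ellF m phi = u)).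
  apply ellF_surj.
Qed.

Lemma am_ellF x : am m (ellF m x) = x.
Proof. apply ellF_inj. apply ellF_am. Qed.

Lemma am_strict u v : u < v -> am m u < am m v.
Proof.
  intros H. destruct (Rlt_le_dec (am m u) (am m v)); auto.
  pose proof (ellF_diff m Hm _ _ r). rewrite !ellF_am in H0. lra.
Qed.

Lemma am_lip u v : Rabs (am m u - am m v) <= Rabs (u - v).
Proof.
  destruct (Rle_dec (am m u) (am m v)).
  - pose proof (ellF_diff m Hm _ _ r). rewrite !ellF_am in H.
    rewrite !Rabs_left1; lra.
  - pose proof (ellF_diff m Hm (am m v) (am m u)). rewrite !ellF_am in H.
    rewrite !Rabs_pos_eq; lra.
Qed.

Lemma am_0 : am m 0 = 0.
Proof. pose proof (am_ellF 0) as H. rewrite ellF_0 in H. exact H. Qed.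

Lemma am_K : am m (ellK m) = PI / 2.
Proof. apply am_ellF. Qed.

Lemma am_neg u : am m (- u) = - am m u.
Proof. apply ellF_inj. rewrite ellF_odd, !ellF_am. auto. Qed.

Lemma am_2K u : am m (u + 2 * ellK m) = am m u + PI.
Proof. apply ellF_inj. rewrite ellF_pi, !ellF_am. auto. Qed.

Lemma K_pos : 0 < ellK m.
Proof. unfold ellK. pose proof PI_RGT_0. pose proof (ellF_strict 0 (PI/2)). rewrite ellF_0 in H0. apply H0. lra. Qed.

End Ell2.


Section Ell3.
Variable m : R.
Hypothesis Hm : 0 <= m < 1.

Lemma am_cont u : continuity_pt (am m) u.
Proof.
  intros eps Heps. exists eps. split; auto. intros x [_ Hx].
  simpl in *. unfold R_dist in *. pose proof (am_lip m Hm x u). lra.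
Qed.

Lemma am_derive u : is_derive (am m) u (Dl m (am m u)).
Proof.
  apply is_derive_Reals.
  assert (Prf : forall a, am m (u-1) <= a <= am m (u+1) -> derivable_pt (ellF m) a).
  { intros a _. apply ex_derive_Reals_0. eexists. apply (ellF_derive m Hm). }
  assert (Hinc : am m (u-1) <= am m u <= am m (u+1)).
  { split; apply Rlt_le, am_strict; auto; lra. }
  pose proof (derivable_pt_lim_recip_interv (ellF m) (am m) (u-1) (u+1) u Prf (am_cont u)
     ltac:(lra) ltac:(lra) Hinc) as H.
  assert (E : derive_pt (ellF m) (am m u) (Prf (am m u) Hinc) = fint m (am m u)).
  { apply derive_pt_eq_0. apply is_derive_Reals. apply (ellF_derive m Hm). }
  rewrite E in H.
  replace (Dl m (am m u)) with (1 / fint m (am m u)).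
  - apply H.
    + intros x _. unfold comp, id. apply ellF_am; auto.
    + pose proof (fint_ge1 m Hm (am m u)). lra.
  - unfold fint, Dl. pose proof (Dl_pos m Hm (am m u)). unfold Dl in H0. field. lra.
Qed.

End Ell3.


Section Ell4.
Variable m : R.
Hypothesis Hm : 0 <= m < 1.

Lemma sn_derive u : is_derive (fun x => sn m x) u (cn m u * dn m u).
Proof.
  unfold sn, cn.
  assert (Hs : is_derive (fun x : R => sin x) (am m u) (cos (am m u))) by (auto_derive; [auto | apply Rmult_1_l]).
  pose proof (is_derive_comp (fun x => sin x) (am m) u (cos (am m u)) _ Hs (am_derive m Hm u)) as H.
  apply (is_derive_eq _ _ _ _ H). unfold dn, sn, Dl. unfold scal; simpl. unfold mult; simpl. ring.
Qed.

Lemma cn_derive u : is_derive (fun x => cn m x) u (- sn m u * dn m u).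
Proof.
  unfold sn, cn.
  assert (Hs : is_derive (fun x : R => cos x) (am m u) (- sin (am m u))) by (auto_derive; [auto | apply Rmult_1_l]).
  pose proof (is_derive_comp (fun x => cos x) (am m) u (- sin (am m u)) _ Hs (am_derive m Hm u)) as H.
  apply (is_derive_eq _ _ _ _ H). unfold dn, sn, Dl. unfold scal; simpl. unfold mult; simpl. ring.
Qed.

Lemma dn_pos u : 0 < dn m u.
Proof. apply (Dl_pos m Hm). Qed.

Lemma dn_sq u : dn m u ^ 2 = 1 - m ^ 2 * sn m u ^ 2.
Proof. unfold dn. rewrite pow2_sqrt; auto. pose proof (rad_pos m Hm (am m u)). unfold sn. lra. Qed.

Lemma sncn u : sn m u ^ 2 + cn m u ^ 2 = 1.
Proof. unfold sn, cn. rewrite <- (sin2_cos2 (am m u)). unfold Rsqr. ring. Qed.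

Lemma dn_derive u : is_derive (fun x => dn m x) u (- m ^ 2 * sn m u * cn m u).
Proof.
  unfold dn.
  assert (H0 : 0 < 1 - m ^ 2 * sn m u ^ 2) by (unfold sn; apply (rad_pos m Hm)).
  pose proof (is_derive_comp (fun t => sqrt (1 - m ^ 2 * t ^ 2)) (fun x => sn m x) u _ _
     ltac:(auto_derive; [exact H0| reflexivity]) (sn_derive u)) as H.
  apply (is_derive_eq _ _ _ _ H). unfold scal; simpl. unfold mult; simpl. fold (dn m u).
  pose proof (dn_pos u). unfold dn in *. replace (1 + - (m*(m*1)*(sn m u*(sn m u*1)))) with (1 - m^2*sn m u^2) by ring. field. lra.
Qed.

Lemma Derive_sn x : Derive (fun x => sn m x) x = cn m x * dn m x.
Proof. apply is_derive_unique, sn_derive. Qed.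
Lemma Derive_cn x : Derive (fun x => cn m x) x = - sn m x * dn m x.
Proof. apply is_derive_unique, cn_derive. Qed.
Lemma Derive_dn x : Derive (fun x => dn m x) x = - m ^ 2 * sn m x * cn m x.
Proof. apply is_derive_unique, dn_derive. Qed.

Lemma den_pos u v : 0 < 1 - m ^ 2 * sn m u ^ 2 * sn m v ^ 2.
Proof.
  pose proof (sncn u). pose proof (sncn v).
  assert (0 <= sn m u ^ 2 <= 1) by (split; nra). assert (0 <= sn m v ^ 2 <= 1) by (split; nra).
  assert (sn m u ^ 2 * sn m v ^ 2 <= 1) by nra. assert (m^2 < 1) by nra. nra.
Qed.

Lemma sn_0 : sn m 0 = 0.
Proof. unfold sn. rewrite (am_0 m Hm). apply sin_0. Qed.
Lemma cn_0 : cn m 0 = 1.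
Proof. unfold cn. rewrite (am_0 m Hm). apply cos_0. Qed.
Lemma dn_0 : dn m 0 = 1.
Proof. unfold dn. rewrite sn_0. replace (1 - m ^ 2 * 0 ^ 2) with 1 by ring. apply sqrt_1. Qed.

End Ell4.

Section S5.
Variable m : R.
Hypothesis Hm : 0 <= m < 1.
Lemma quot0 A B C D : D <> 0 -> A*D + B*C = 0 -> A * /D + B * (- - C * /(D*D)) = 0.
Proof. intros. field_simplify_eq; auto. Qed.

Lemma add_sn u v : sn m (u + v) =
  (sn m u * cn m v * dn m v + sn m v * cn m u * dn m u) / (1 - m ^ 2 * sn m u ^ 2 * sn m v ^ 2).
Proof.
  set (w := u + v).
  set (F := fun x => (sn m x * cn m (w - x) * dn m (w - x) + sn m (w - x) * cn m x * dn m x) /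
                      (1 - m ^ 2 * sn m x ^ 2 * sn m (w - x) ^ 2)).
  assert (HD : forall x, is_derive F x 0).
  { intros x. unfold F. 
    pose proof (den_pos m Hm x (w + - x)) as Hd.
    auto_derive. 
    - repeat match goal with
      | |- _ /\ _ => split
      | |- True => exact I
      | |- ex_derive (fun x => sn m x) ?y => exists (cn m y * dn m y); exact (sn_derive m Hm y)
      | |- ex_derive (fun x => cn m x) ?y => exists (- sn m y * dn m y); exact (cn_derive m Hm y)
      | |- ex_derive (fun x => dn m x) ?y => exists (- m ^ 2 * sn m y * cn m y); exact (dn_derive m Hm y)
      end.
      simpl in Hd. lra.
    - rewrite !(Derive_sn m Hm), !(Derive_cn m Hm), !(Derive_dn m Hm).
      apply quot0. simpl in Hd; lra.
      pose proof (sncn m x) as H1. pose proof (sncn m (w + - x)) as H2.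
      pose proof (dn_sq m Hm x) as H3. pose proof (dn_sq m Hm (w + - x)) as H4.
      set (s1 := sn m x) in *. set (c1 := cn m x) in *. set (d1 := dn m x) in *.
      set (s2 := sn m (w + - x)) in *. set (c2 := cn m (w + - x)) in *. set (d2 := dn m (w + - x)) in *.
      clearbody s1 c1 d1 s2 c2 d2. simpl in *. nsatz.
 }
  pose proof (deriv0_const F HD u 0) as H. unfold F in H.
  replace (w - 0) with w in H by ring. rewrite (sn_0 m Hm), (cn_0 m Hm), (dn_0 m Hm) in H.
  replace (w - u) with v in H by (unfold w; ring).
  rewrite H. field.

Qed.

Lemma add_cn u v : cn m (u + v) =
  (cn m u * cn m v - sn m u * sn m v * dn m u * dn m v) / (1 - m ^ 2 * sn m u ^ 2 * sn m v ^ 2).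
Proof.
  set (w := u + v).
  set (F := fun x => (cn m x * cn m (w - x) - sn m x * sn m (w - x) * dn m x * dn m (w - x)) /
                      (1 - m ^ 2 * sn m x ^ 2 * sn m (w - x) ^ 2)).
  assert (HD : forall x, is_derive F x 0).
  { intros x. unfold F. 
    pose proof (den_pos m Hm x (w + - x)) as Hd.
    auto_derive. 
    - repeat match goal with
      | |- _ /\ _ => split
      | |- True => exact I
      | |- ex_derive (fun x => sn m x) ?y => exists (cn m y * dn m y); exact (sn_derive m Hm y)
      | |- ex_derive (fun x => cn m x) ?y => exists (- sn m y * dn m y); exact (cn_derive m Hm y)
      | |- ex_derive (fun x => dn m x) ?y => exists (- m ^ 2 * sn m y * cn m y); exact (dn_derive m Hm y)
      end.
      simpl in Hd. lra.
    - rewrite !(Derive_sn m Hm), !(Derive_cn m Hm), !(Derive_dn m Hm).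
      apply quot0. simpl in Hd; lra.
      pose proof (sncn m x) as H1. pose proof (sncn m (w + - x)) as H2.
      pose proof (dn_sq m Hm x) as H3. pose proof (dn_sq m Hm (w + - x)) as H4.
      set (s1 := sn m x) in *. set (c1 := cn m x) in *. set (d1 := dn m x) in *.
      set (s2 := sn m (w + - x)) in *. set (c2 := cn m (w + - x)) in *. set (d2 := dn m (w + - x)) in *.
      clearbody s1 c1 d1 s2 c2 d2. simpl in *. nsatz.
 }
  pose proof (deriv0_const F HD u 0) as H. unfold F in H.
  replace (w - 0) with w in H by ring. rewrite (sn_0 m Hm), (cn_0 m Hm), (dn_0 m Hm) in H.
  replace (w - u) with v in H by (unfold w; ring).
  rewrite H. field.

Qed.

End S5.


Definition tdisc (ac bc : R) (A B : point) : Prop :=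
  bc ^ 2 * (fst B - fst A) ^ 2 + ac ^ 2 * (snd B - snd A) ^ 2 =
  (fst A * (snd B - snd A) - snd A * (fst B - fst A)) ^ 2.

Lemma sq_pos x : x <> 0 -> 0 < x ^ 2.
Proof. intros. pose proof (Rsqr_pos_lt x H). unfold Rsqr in H0. simpl. lra. Qed.

Lemma pt_neq (A B : point) : A <> B -> fst B - fst A <> 0 \/ snd B - snd A <> 0.
Proof.
  destruct A as [a1 a2], B as [b1 b2]; simpl. intros H.
  destruct (Req_dec (b1 - a1) 0); destruct (Req_dec (b2 - a2) 0); auto.
  exfalso; apply H. f_equal; lra.
Qed.

Lemma tan_key (ac bc ax ay wx wy t : R) : ac <> 0 -> bc <> 0 ->
  let p := ax / ac in let q := ay / bc in let r := wx / ac in let s := wy / bc in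
  (r ^ 2 + s ^ 2) * ((ax + t * wx) ^ 2 / ac ^ 2 + (ay + t * wy) ^ 2 / bc ^ 2 - 1) =
  ((r ^ 2 + s ^ 2) * t + (p * r + q * s)) ^ 2 + ((p * s - q * r) ^ 2 - (r ^ 2 + s ^ 2)).
Proof. intros. unfold p, q, r, s. field. auto. Qed.

Lemma E_key (ac bc ax ay wx wy : R) : ac <> 0 -> bc <> 0 ->
  let p := ax / ac in let q := ay / bc in let r := wx / ac in let s := wy / bc in
  ((p * s - q * r) ^ 2 - (r ^ 2 + s ^ 2)) * (ac ^ 2 * bc ^ 2) =
  (ax * wy - ay * wx) ^ 2 - (bc ^ 2 * wx ^ 2 + ac ^ 2 * wy ^ 2).
Proof. intros. unfold p, q, r, s. field. auto. Qed.

Lemma alpha_pos (ac bc wx wy : R) : ac <> 0 -> bc <> 0 -> (wx <> 0 \/ wy <> 0) ->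
  0 < (wx / ac) ^ 2 + (wy / bc) ^ 2.
Proof.
  intros. destruct H1.
  - assert (wx / ac <> 0) by (unfold Rdiv; apply Rmult_integral_contrapositive; split; auto; apply Rinv_neq_0_compat; auto).
    pose proof (sq_pos _ H2) . pose proof (pow2_ge_0 (wy/bc)). lra.
  - assert (wy / bc <> 0) by (unfold Rdiv; apply Rmult_integral_contrapositive; split; auto; apply Rinv_neq_0_compat; auto).
    pose proof (sq_pos _ H2) . pose proof (pow2_ge_0 (wx/ac)). lra.
Qed.

Lemma tangent_iff (ac bc : R) (A B : point) : 0 < ac -> 0 < bc ->
  tangent_line ac bc A B <-> (A <> B /\ tdisc ac bc A B).
Proof.
  intros Hac Hbc.
  destruct A as [ax ay], B as [bx by0]. unfold tangent_line, tdisc, on_ellipse, on_line; cbn [fst snd].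
  set (wx := bx - ax). set (wy := by0 - ay).
  assert (Hac' : ac <> 0) by lra. assert (Hbc' : bc <> 0) by lra.
  pose proof (fun t => tan_key ac bc ax ay wx wy t Hac' Hbc') as TK.
  pose proof (E_key ac bc ax ay wx wy Hac' Hbc') as EK.
  cbv zeta in TK, EK.
  set (p := ax / ac) in *. set (q := ay / bc) in *. set (r := wx / ac) in *. set (s := wy / bc) in *.
  set (al := r ^ 2 + s ^ 2) in *. set (k := p * r + q * s) in *.
  set (E := (p * s - q * r) ^ 2 - al) in *.
  assert (Hacbc : 0 < ac ^ 2 * bc ^ 2) by (apply Rmult_lt_0_compat; apply pow_lt; auto).
  split.
  - intros [Hne [X [[HX1 [t Ht]] HU]]].
    split; auto.
    pose proof (pt_neq _ _ Hne) as Hw. simpl in Hw. fold wx wy in Hw.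
    pose proof (alpha_pos ac bc wx wy Hac' Hbc' Hw) as Hal. fold r s al in Hal.
    assert (E = 0).
    { destruct (Rtotal_order E 0) as [Hn|[Hz|Hp]]; auto.
      - exfalso.
        set (r0 := sqrt (- E)).
        assert (Hr0 : 0 < r0) by (apply sqrt_lt_R0; lra).
        assert (Hr0s : r0 ^ 2 = - E) by (unfold r0; rewrite pow2_sqrt; lra).
        set (t1 := (- k + r0) / al). set (t2 := (- k - r0) / al).
        assert (G : forall t0, (al * t0 + k) ^ 2 + E = 0 ->
                  (fst (ax + t0 * wx, ay + t0 * wy)) ^ 2 / ac ^ 2 + (snd (ax + t0 * wx, ay + t0 * wy)) ^ 2 / bc ^ 2 = 1 /\
                  exists t, (ax + t0 * wx, ay + t0 * wy) = (ax + t * wx, ay + t * wy)).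
        { intros t0 Ht0. cbn [fst snd]. split; [|exists t0; auto].
          specialize (TK t0). rewrite Ht0 in TK.
          apply Rmult_integral in TK. destruct TK; [lra|]. lra. }
        assert (G1 := HU _ (G t1 ltac:(replace (al * t1 + k) with r0 by (unfold t1; field; lra); lra))).
        assert (G2 := HU _ (G t2 ltac:(replace (al * t2 + k) with (- r0) by (unfold t2; field; lra); replace ((- r0)^2) with (r0^2) by ring; lra))).
        rewrite G1 in G2. injection G2 as E1 E2.
        assert (t1 - t2 <> 0) by (unfold t1, t2; unfold Rdiv; rewrite <- Rmult_minus_distr_r;
          apply Rmult_integral_contrapositive; split; [lra| apply Rinv_neq_0_compat; lra]).
        destruct Hw as [Hw|Hw].
        + apply Hw. apply (Rmult_eq_reg_l (t1 - t2)); auto. lra.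
        + apply Hw. apply (Rmult_eq_reg_l (t1 - t2)); auto. lra.
      - exfalso. subst X. cbn [fst snd] in HX1.
        specialize (TK t). rewrite HX1 in TK.
        pose proof (pow2_ge_0 (al * t + k)). nra. }
    assert (E * (ac ^ 2 * bc ^ 2) = 0) by (rewrite H; ring). lra.
  - intros [Hne Hd].
    pose proof (pt_neq _ _ Hne) as Hw. simpl in Hw. fold wx wy in Hw.
    pose proof (alpha_pos ac bc wx wy Hac' Hbc' Hw) as Hal. fold r s al in Hal.
    assert (HE : E = 0).
    { assert (E * (ac ^ 2 * bc ^ 2) = 0) by lra.
      apply Rmult_integral in H. destruct H; auto. lra. }
    split; auto.
    set (t0 := - k / al).
    exists (ax + t0 * wx, ay + t0 * wy). split.
    + split.
      * cbn [fst snd]. specialize (TK t0).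
        replace (al * t0 + k) with 0 in TK by (unfold t0; field; lra).
        rewrite HE in TK.
        assert (al * ((ax + t0 * wx) ^ 2 / ac ^ 2 + (ay + t0 * wy) ^ 2 / bc ^ 2 - 1) = 0) by (rewrite TK; ring).
        apply Rmult_integral in H. destruct H; lra.
      * exists t0. auto.
    + intros Y [HY1 [t Ht]]. subst Y. cbn [fst snd] in HY1.
      specialize (TK t). rewrite HY1, HE in TK.
      assert ((al * t + k) ^ 2 = 0) by lra.
      assert (al * t + k = 0) by (destruct (Req_dec (al * t + k) 0); auto; exfalso; apply (pow_nonzero _ 2 H0); auto).
      assert (t = t0) by (unfold t0; apply (Rmult_eq_reg_l al); [replace (al * (- k / al)) with (- k) by (field; lra); lra | lra]). subst t. auto.
Qed.


Lemma line_ell (ae be : R) (A B : point) t : 0 < ae -> 0 < be -> A <> B ->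
  on_ellipse ae be A -> on_ellipse ae be B ->
  on_ellipse ae be (fst A + t * (fst B - fst A), snd A + t * (snd B - snd A)) ->
  t = 0 \/ t = 1.
Proof.
  intros Hae Hbe Hne HA HB HX.
  pose proof (pt_neq _ _ Hne) as Hw.
  destruct A as [ax ay], B as [bx by0]. unfold on_ellipse in *. cbn [fst snd] in *.
  set (wx := bx - ax) in *. set (wy := by0 - ay) in *.
  assert (Hae' : ae <> 0) by lra. assert (Hbe' : be <> 0) by lra.
  pose proof (alpha_pos ae be wx wy Hae' Hbe' Hw) as Hal.
  assert (Id : (ax + t * wx) ^ 2 / ae ^ 2 + (ay + t * wy) ^ 2 / be ^ 2 - 1 =
     ((wx / ae) ^ 2 + (wy / be) ^ 2) * t * (t - 1) + (1 - t) * (ax ^ 2 / ae ^ 2 + ay ^ 2 / be ^ 2 - 1)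
     + t * ((ax + wx) ^ 2 / ae ^ 2 + (ay + wy) ^ 2 / be ^ 2 - 1)).
  { field. auto. }
  replace (ax + wx) with bx in Id by (unfold wx; ring).
  replace (ay + wy) with by0 in Id by (unfold wy; ring).
  rewrite HA, HB, HX in Id.
  assert (((wx / ae) ^ 2 + (wy / be) ^ 2) * (t * (t - 1)) = 0) by lra.
  apply Rmult_integral in H. destruct H; [lra|].
  apply Rmult_integral in H. destruct H; [left; auto| right; lra].
Qed.

Lemma parallel (vx vy wx wy : R) : vx * wy - vy * wx = 0 -> (wx <> 0 \/ wy <> 0) ->
  exists l, vx = l * wx /\ vy = l * wy.
Proof.
  intros H [Hw|Hw].
  - exists (vx / wx). split. field; auto. apply (Rmult_eq_reg_l wx); auto. field_simplify; auto. lra.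
  - exists (vy / wy). split. apply (Rmult_eq_reg_l wy); auto. field_simplify; auto. lra. field; auto.
Qed.

Definition Qf (ac bc ax ay wx wy : R) := bc ^ 2 * wx ^ 2 + ac ^ 2 * wy ^ 2 - (ax * wy - ay * wx) ^ 2.
Definition Bf (ac bc ax ay ux uy vx vy : R) :=
  bc ^ 2 * ux * vx + ac ^ 2 * uy * vy - (ax * uy - ay * ux) * (ax * vy - ay * vx).

Lemma qf_id ac bc ax ay ux uy vx vy zx zy :
  (ux * vy - uy * vx) ^ 2 * Qf ac bc ax ay zx zy =
  (zx * vy - zy * vx) ^ 2 * Qf ac bc ax ay ux uy
  + 2 * (zx * vy - zy * vx) * (ux * zy - uy * zx) * Bf ac bc ax ay ux uy vx vy
  + (ux * zy - uy * zx) ^ 2 * Qf ac bc ax ay vx vy.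
Proof. unfold Qf, Bf. ring. Qed.

Lemma qf_two ac bc ax ay ux uy vx vy zx zy : 0 < ac -> 0 < bc ->
  Qf ac bc ax ay ux uy = 0 -> Qf ac bc ax ay vx vy = 0 -> Qf ac bc ax ay zx zy = 0 ->
  ux * vy - uy * vx <> 0 ->
  zx * vy - zy * vx = 0 \/ ux * zy - uy * zx = 0.
Proof.
  intros Hac Hbc H1 H2 H3 Hd.
  destruct (Req_dec (zx * vy - zy * vx) 0) as [h|h]; auto.
  destruct (Req_dec (ux * zy - uy * zx) 0) as [h'|h']; auto.
  exfalso.
  pose proof (qf_id ac bc ax ay ux uy vx vy zx zy) as I.
  rewrite H1, H2, H3 in I.
  assert (HB : Bf ac bc ax ay ux uy vx vy = 0).
  { assert (Hk : 2 * (zx * vy - zy * vx) * (ux * zy - uy * zx) <> 0)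
      by (repeat apply Rmult_integral_contrapositive_currified; lra).
    rewrite !Rmult_0_r, !Rplus_0_l, !Rplus_0_r in I.
    apply (Rmult_eq_reg_l (2 * (zx * vy - zy * vx) * (ux * zy - uy * zx))); [rewrite Rmult_0_r; symmetry; exact I | exact Hk]. }
  assert (Hsq : 0 < (ux * vy - uy * vx) ^ 2) by (apply sq_pos; auto).
  assert (Z : forall z1 z2, Qf ac bc ax ay z1 z2 = 0).
  { intros z1 z2. pose proof (qf_id ac bc ax ay ux uy vx vy z1 z2) as I2.
    rewrite H1, H2, HB in I2.
    assert ((ux * vy - uy * vx) ^ 2 * Qf ac bc ax ay z1 z2 = 0) by lra.
    apply Rmult_integral in H. destruct H; lra. }
  pose proof (Z 1 0) as Z1. pose proof (Z 0 1) as Z2. pose proof (Z 1 1) as Z3.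
  unfold Qf in Z1, Z2, Z3.
  assert (ax * ay = 0) by nra.
  apply Rmult_integral in H. destruct H; subst; nra.
Qed.

Lemma step_two (ae be ac bc : R) (A P1 P2 Q : point) :
  0 < ae -> 0 < be -> 0 < ac -> 0 < bc ->
  on_ellipse ae be A -> on_ellipse ae be P1 -> on_ellipse ae be P2 -> on_ellipse ae be Q ->
  tdisc ac bc A P1 -> tdisc ac bc A P2 -> tdisc ac bc A Q -> Q <> A ->
  det2 (fst P1 - fst A, snd P1 - snd A) (fst P2 - fst A, snd P2 - snd A) <> 0 ->
  Q = P1 \/ Q = P2.
Proof.
  intros Hae Hbe Hac Hbc HA H1 H2 HQ T1 T2 TQ HQA Hd.
  unfold det2 in Hd; cbn [fst snd] in Hd.
  assert (E : forall B, tdisc ac bc A B -> Qf ac bc (fst A) (snd A) (fst B - fst A) (snd B - snd A) = 0).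
  { intros B HB. unfold tdisc in HB. unfold Qf. lra. }
  destruct (qf_two ac bc (fst A) (snd A) _ _ _ _ _ _ Hac Hbc (E _ T1) (E _ T2) (E _ TQ) Hd) as [h|h].
  - right.
    assert (Hw : fst P2 - fst A <> 0 \/ snd P2 - snd A <> 0).
    { destruct (Req_dec (fst P2 - fst A) 0); destruct (Req_dec (snd P2 - snd A) 0); auto.
      exfalso; apply Hd. rewrite H, H0. ring. }
    destruct (parallel _ _ _ _ h Hw) as [l [l1 l2]].
    assert (P2 <> A).
    { intros e; subst. destruct Hw; lra. }
    assert (HX : on_ellipse ae be (fst A + l * (fst P2 - fst A), snd A + l * (snd P2 - snd A))).
    { replace (fst A + l * (fst P2 - fst A), snd A + l * (snd P2 - snd A)) with Q; auto.
      destruct Q; simpl in *. f_equal; lra. }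
    destruct (line_ell ae be A P2 l Hae Hbe (not_eq_sym H) HA H2 HX); subst l.
    + exfalso. apply HQA. destruct Q, A; simpl in *. f_equal; lra.
    + destruct Q, P2, A; simpl in *. f_equal; lra.
  - left.
    assert (Hw : fst P1 - fst A <> 0 \/ snd P1 - snd A <> 0).
    { destruct (Req_dec (fst P1 - fst A) 0); destruct (Req_dec (snd P1 - snd A) 0); auto.
      exfalso; apply Hd. rewrite H, H0. ring. }
    assert (h' : (fst Q - fst A) * (snd P1 - snd A) - (snd Q - snd A) * (fst P1 - fst A) = 0) by lra.
    destruct (parallel _ _ _ _ h' Hw) as [l [l1 l2]].
    assert (P1 <> A).
    { intros e; subst. destruct Hw; lra. }
    assert (HX : on_ellipse ae be (fst A + l * (fst P1 - fst A), snd A + l * (snd P1 - snd A))).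
    { replace (fst A + l * (fst P1 - fst A), snd A + l * (snd P1 - snd A)) with Q; auto.
      destruct Q; simpl in *. f_equal; lra. }
    destruct (line_ell ae be A P1 l Hae Hbe (not_eq_sym H) HA H1 HX); subst l.
    + exfalso. apply HQA. destruct Q, A; simpl in *. f_equal; lra.
    + destruct Q, P1, A; simpl in *. f_equal; lra.
Qed.

Lemma tdisc_sym ac bc A B : tdisc ac bc A B -> tdisc ac bc B A.
Proof.
  destruct A as [a1 a2], B as [b1 b2]. unfold tdisc; cbn [fst snd]. intros H.
  replace (bc ^ 2 * (a1 - b1) ^ 2 + ac ^ 2 * (a2 - b2) ^ 2) with (bc ^ 2 * (b1 - a1) ^ 2 + ac ^ 2 * (b2 - a2) ^ 2) by ring.
  rewrite H. ring.
Qed.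

Lemma noncol (ae be : R) (A B C : point) : 0 < ae -> 0 < be ->
  on_ellipse ae be A -> on_ellipse ae be B -> on_ellipse ae be C ->
  A <> B -> C <> A -> C <> B -> ~ on_line A B C.
Proof.
  intros Hae Hbe HA HB HC h1 h2 h3 [t Ht].
  rewrite Ht in HC.
  destruct (line_ell ae be A B t Hae Hbe h1 HA HB HC); subst t.
  - apply h2. rewrite Ht. destruct A; simpl. f_equal; ring.
  - apply h3. rewrite Ht. destruct A, B; simpl. f_equal; ring.
Qed.

Lemma noncol_det (ae be : R) (A B C : point) : 0 < ae -> 0 < be ->
  on_ellipse ae be A -> on_ellipse ae be B -> on_ellipse ae be C ->
  A <> B -> C <> A -> C <> B ->
  det2 (fst B - fst A, snd B - snd A) (fst C - fst A, snd C - snd A) <> 0.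
Proof.
  intros Hae Hbe HA HB HC h1 h2 h3 Hd.
  unfold det2 in Hd; cbn [fst snd] in Hd.
  pose proof (pt_neq _ _ h1) as Hw.
  assert (h' : (fst C - fst A) * (snd B - snd A) - (snd C - snd A) * (fst B - fst A) = 0) by lra.
  destruct (parallel _ _ _ _ h' Hw) as [l [l1 l2]].
  apply (noncol ae be A B C Hae Hbe HA HB HC h1 h2 h3).
  exists l. destruct C; simpl in *. f_equal; lra.
Qed.


Lemma alg_tan (ae be ac bc m s c d S C D : R) :
  s ^ 2 + c ^ 2 = 1 -> d ^ 2 = 1 - m ^ 2 * s ^ 2 -> D ^ 2 = 1 - m ^ 2 * S ^ 2 ->
  be * C = bc -> ac ^ 2 * be ^ 2 * D ^ 2 = ae ^ 2 * bc ^ 2 ->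
  1 - m ^ 2 * s ^ 2 * S ^ 2 <> 0 ->
  tdisc ac bc (- ae * ((s * C * D - S * c * d) / (1 - m ^ 2 * s ^ 2 * S ^ 2)),
               be * ((c * C + s * S * d * D) / (1 - m ^ 2 * s ^ 2 * S ^ 2)))
              (- ae * ((s * C * D + S * c * d) / (1 - m ^ 2 * s ^ 2 * S ^ 2)),
               be * ((c * C - s * S * d * D) / (1 - m ^ 2 * s ^ 2 * S ^ 2))) /\
  det2 (- ae * ((s * C * D - S * c * d) / (1 - m ^ 2 * s ^ 2 * S ^ 2)),
        be * ((c * C + s * S * d * D) / (1 - m ^ 2 * s ^ 2 * S ^ 2)))
       (- ae * ((s * C * D + S * c * d) / (1 - m ^ 2 * s ^ 2 * S ^ 2)),
        be * ((c * C - s * S * d * D) / (1 - m ^ 2 * s ^ 2 * S ^ 2)))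
  = ae * be * (2 * S * C * d / (1 - m ^ 2 * s ^ 2 * S ^ 2)).
Proof.
  intros H1 H2 H3 HC HK HDen.
  set (Den := 1 - m ^ 2 * s ^ 2 * S ^ 2) in *.
  assert (Hpoly : (c * C + s * S * d * D) * (s * C * D + S * c * d) - (s * C * D - S * c * d) * (c * C - s * S * d * D)
                  = 2 * S * C * d * Den).
  { unfold Den. simpl in *. nsatz. }
  assert (Hdet : det2 (- ae * ((s * C * D - S * c * d) / Den), be * ((c * C + s * S * d * D) / Den))
       (- ae * ((s * C * D + S * c * d) / Den), be * ((c * C - s * S * d * D) / Den))
       = ae * be * (2 * S * C * d / Den)).
  { unfold det2; cbn [fst snd].
    transitivity (ae * be * (((c * C + s * S * d * D) * (s * C * D + S * c * d) - (s * C * D - S * c * d) * (c * C - s * S * d * D)) / Den / Den)).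
    field; auto. rewrite Hpoly. field; auto. }
  split; auto.
  unfold tdisc. cbn [fst snd].
  unfold det2 in Hdet; cbn [fst snd] in Hdet.
  replace ((- ae * ((s * C * D - S * c * d) / Den)) * (be * ((c * C - s * S * d * D) / Den) - be * ((c * C + s * S * d * D) / Den)) -
      be * ((c * C + s * S * d * D) / Den) * (- ae * ((s * C * D + S * c * d) / Den) - - ae * ((s * C * D - S * c * d) / Den)))
    with (ae * be * (2 * S * C * d / Den)).
  2:{ rewrite <- Hdet. field; auto. }
  replace (- ae * ((s * C * D + S * c * d) / Den) - - ae * ((s * C * D - S * c * d) / Den))
    with (- ae * (2 * S * c * d) / Den) by (field; auto).
  replace (be * ((c * C - s * S * d * D) / Den) - be * ((c * C + s * S * d * D) / Den))
    with (- be * (2 * s * S * d * D) / Den) by (field; auto).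
  apply (Rmult_eq_reg_r (Den ^ 2)). 2: { apply pow_nonzero; auto. }
  field_simplify; auto.
  simpl in *. nsatz.
Qed.


Lemma sn_neg m u : 0 <= m < 1 -> sn m (- u) = - sn m u.
Proof. intros. unfold sn. rewrite am_neg; auto. apply sin_neg. Qed.
Lemma cn_neg m u : 0 <= m < 1 -> cn m (- u) = cn m u.
Proof. intros. unfold cn. rewrite am_neg; auto. apply cos_neg. Qed.
Lemma dn_neg m u : 0 <= m < 1 -> dn m (- u) = dn m u.
Proof. intros. unfold dn. rewrite sn_neg; auto. f_equal. ring. Qed.

Lemma det2_neq A B : 0 < det2 A B -> A <> B.
Proof. intros H e. subst. unfold det2 in H. lra. Qed.

Lemma det2_anti A B : det2 A B = - det2 B A.
Proof. unfold det2. ring. Qed.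

Lemma param_on m ae be u : 0 < ae -> 0 < be -> on_ellipse ae be (param m ae be u).
Proof.
  intros. unfold on_ellipse, param; cbn [fst snd].
  replace ((- ae * sn m u) ^ 2 / ae ^ 2 + (be * cn m u) ^ 2 / be ^ 2) with (sn m u ^ 2 + cn m u ^ 2) by (field; lra).
  apply sncn.
Qed.

Section Part1.
Variables ac bc ae be ke du m : R.
Hypothesis Hm : 0 <= m < 1.
Hypothesis Hm2 : m ^ 2 * ac ^ 2 = ac ^ 2 - bc ^ 2.
Hypothesis Hbc : 0 < bc.
Hypothesis Hac : bc < ac.
Hypothesis Hke : 0 < ke.
Hypothesis Hae : 0 < ae.
Hypothesis Hbe : 0 < be.
Hypothesis Hae2 : ae ^ 2 = ac ^ 2 + ke.
Hypothesis Hbe2 : be ^ 2 = bc ^ 2 + ke.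
Hypothesis Hdu : 0 < du.
Hypothesis HduK : du < ellK m.
Hypothesis Hcn : bc = be * cn m du.

Lemma amdu_range : 0 < am m du < PI / 2.
Proof.
  rewrite <- (am_K m Hm). rewrite <- (am_0 m Hm) at 1. split; apply am_strict; auto.
Qed.

Lemma S_pos : 0 < sn m du.
Proof. unfold sn. pose proof amdu_range. apply sin_gt_0; lra. Qed.

Lemma C_pos : 0 < cn m du.
Proof. unfold cn. pose proof amdu_range. apply cos_gt_0; lra. Qed.

Lemma HKey : ac ^ 2 * be ^ 2 * dn m du ^ 2 = ae ^ 2 * bc ^ 2.
Proof.
  rewrite (dn_sq m Hm). pose proof (sncn m du).
  rewrite Hcn. rewrite Hae2. 
  assert (sn m du ^ 2 = 1 - cn m du ^ 2) by lra. rewrite H0.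
  assert (be ^ 2 = bc ^ 2 + ke) by auto. rewrite Hcn in H1.
  nra.
Qed.

Lemma pair_tan u :
  tdisc ac bc (param m ae be (u - du)) (param m ae be (u + du)) /\
  0 < det2 (param m ae be (u - du)) (param m ae be (u + du)).
Proof.
  assert (HD : 1 - m ^ 2 * sn m u ^ 2 * sn m du ^ 2 <> 0) by (pose proof (den_pos m Hm u du); lra).
  assert (EA : param m ae be (u - du) =
    (- ae * ((sn m u * cn m du * dn m du - sn m du * cn m u * dn m u) / (1 - m ^ 2 * sn m u ^ 2 * sn m du ^ 2)),
     be * ((cn m u * cn m du + sn m u * sn m du * dn m u * dn m du) / (1 - m ^ 2 * sn m u ^ 2 * sn m du ^ 2)))).
  { unfold param. replace (u - du) with (u + - du) by ring.
    rewrite (add_sn m Hm), (add_cn m Hm), !sn_neg, !cn_neg, !dn_neg; auto.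
    f_equal; f_equal; field; replace ((m * sn m u * sn m du) ^ 2) with (m ^ 2 * sn m u ^ 2 * sn m du ^ 2) by ring; auto. }
  assert (EB : param m ae be (u + du) =
    (- ae * ((sn m u * cn m du * dn m du + sn m du * cn m u * dn m u) / (1 - m ^ 2 * sn m u ^ 2 * sn m du ^ 2)),
     be * ((cn m u * cn m du - sn m u * sn m du * dn m u * dn m du) / (1 - m ^ 2 * sn m u ^ 2 * sn m du ^ 2)))).
  { unfold param. rewrite (add_sn m Hm), (add_cn m Hm). f_equal; f_equal; field; auto. }
  rewrite EA, EB.
  destruct (alg_tan ae be ac bc m (sn m u) (cn m u) (dn m u) (sn m du) (cn m du) (dn m du)
     (sncn m u) (dn_sq m Hm u) (dn_sq m Hm du) (eq_sym Hcn) HKey HD) as [T Dt].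
  split; auto. rewrite Dt.
  pose proof S_pos. pose proof C_pos. pose proof (dn_pos m Hm u). pose proof (den_pos m Hm u du).
  apply Rmult_lt_0_compat. apply Rmult_lt_0_compat; auto.
  apply Rdiv_lt_0_compat; auto. repeat apply Rmult_lt_0_compat; lra.
Qed.

Variable u0 : R.
Definition X (k : Z) : point := param m ae be (u0 + 2 * IZR k * du).

Lemma X_pair k : tdisc ac bc (X k) (X (k + 1)%Z) /\ 0 < det2 (X k) (X (k + 1)%Z).
Proof.
  unfold X. pose proof (pair_tan (u0 + (2 * IZR k + 1) * du)) as H.
  replace (u0 + (2 * IZR k + 1) * du - du) with (u0 + 2 * IZR k * du) in H by ring.
  replace (u0 + (2 * IZR k + 1) * du + du) with (u0 + 2 * IZR (k + 1) * du) in H by (rewrite plus_IZR; ring).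
  auto.
Qed.

Lemma X_on k : on_ellipse ae be (X k).
Proof. apply param_on; auto. Qed.

Lemma X_billiard : billiard ae be ac bc X.
Proof.
  split; [|split; [|split]].
  - apply X_on.
  - intros i. apply tangent_iff; try lra. destruct (X_pair i). split; auto. apply det2_neq; auto.
  - intros i. destruct (X_pair (i - 1)) as [_ D1]. replace (i - 1 + 1)%Z with i in D1 by ring.
    destruct (X_pair i) as [_ D2].
    apply (noncol ae be); auto using X_on.
    + apply det2_neq; auto.
    + intros e. rewrite e in D2. rewrite det2_anti in D2. lra.
    + intros e. apply det2_neq in D2. auto.
  - intros i. apply X_pair.
Qed.

Lemma X_unique_step (k : Z) (Q : point) : on_ellipse ae be Q -> Q <> X k -> tdisc ac bc (X k) Q ->
  Q = X (k + 1)%Z \/ Q = X (k - 1)%Z.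
Proof.
  intros HQ HQA TQ.
  destruct (X_pair k) as [T1 D1]. destruct (X_pair (k - 1)) as [T2 D2].
  replace (k - 1 + 1)%Z with k in T2, D2 by ring.
  apply (step_two ae be ac bc (X k)); auto using X_on; try lra.
  - apply tdisc_sym; auto.
  - apply (noncol_det ae be); auto using X_on.
    + apply det2_neq; auto.
    + apply det2_neq; auto.
    + intros e. rewrite <- e in D1. rewrite det2_anti in D1. lra.
Qed.

Lemma X_unique (P : Z -> point) : billiard ae be ac bc P -> P 0%Z = X 0%Z -> forall k, P k = X k.
Proof.
  intros [Hon [Htan [_ Hdet]]] H0.
  assert (Fw : forall k, P k = X k -> P (k + 1)%Z = X (k + 1)%Z).
  { intros k Hk. pose proof (Htan k) as T. apply tangent_iff in T; try lra. destruct T as [Hne T].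
    rewrite Hk in T, Hne.
    destruct (X_unique_step k (P (k + 1)%Z) (Hon _) (not_eq_sym Hne) T) as [e|e]; auto.
    exfalso. pose proof (Hdet k) as Dk. rewrite Hk, e in Dk.
    destruct (X_pair (k - 1)) as [_ D2]. replace (k - 1 + 1)%Z with k in D2 by ring.
    rewrite det2_anti in Dk. lra. }
  assert (Bw : forall k, P k = X k -> P (k - 1)%Z = X (k - 1)%Z).
  { intros k Hk. pose proof (Htan (k - 1)%Z) as T. replace (k - 1 + 1)%Z with k in T by ring.
    apply tangent_iff in T; try lra. destruct T as [Hne T].
    rewrite Hk in T, Hne. apply tdisc_sym in T.
    destruct (X_unique_step k (P (k - 1)%Z) (Hon _) Hne T) as [e|e]; auto.
    exfalso. pose proof (Hdet (k - 1)%Z) as Dk. replace (k - 1 + 1)%Z with k in Dk by ring.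
    rewrite Hk, e in Dk.
    destruct (X_pair k) as [_ D2]. rewrite det2_anti in Dk. lra. }
  assert (Pos : forall n : nat, P (Z.of_nat n) = X (Z.of_nat n) /\ P (- Z.of_nat n)%Z = X (- Z.of_nat n)%Z).
  { induction n as [|n IH].
    - simpl. auto.
    - destruct IH as [I1 I2]. rewrite Nat2Z.inj_succ. unfold Z.succ. split.
      + apply Fw; auto.
      + replace (- (Z.of_nat n + 1))%Z with (- Z.of_nat n - 1)%Z by ring. apply Bw; auto. }
  intros k. destruct (Z_le_gt_dec 0 k).
  - rewrite <- (Z2Nat.id k l). apply Pos.
  - replace k with (- Z.of_nat (Z.to_nat (- k)))%Z. apply Pos.
    rewrite Z2Nat.id by lia. ring.
Qed.

End Part1.


Lemma alg_r2 ae be s c : s^2 + c^2 = 1 -> (- ae*s)^2 + (be*c)^2 = (be*c^2 + ae*s^2)^2 + ((ae-be)*s*c)^2.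
Proof. intros. simpl in *. nsatz. Qed.
Lemma alg_c ae be s c : s^2 + c^2 = 1 -> s*(be*c^2 + ae*s^2) + c*((ae-be)*s*c) = ae*s.
Proof. intros. simpl in *. nsatz. Qed.
Lemma alg_s ae be s c : s^2 + c^2 = 1 -> c*(be*c^2 + ae*s^2) - s*((ae-be)*s*c) = be*c.
Proof. intros. simpl in *. nsatz. Qed.

Definition vpt (ae be phi : R) : point := (- ae * sin phi, be * cos phi).

Definition Th (ae be phi : R) : R :=
  phi + PI / 2 + atan (((ae - be) * sin phi * cos phi) / (be * cos phi ^ 2 + ae * sin phi ^ 2)).

Lemma Th_cs ae be phi : 0 < ae -> 0 < be ->
  cos (Th ae be phi) = fst (vpt ae be phi) / vnorm (vpt ae be phi) /\
  sin (Th ae be phi) = snd (vpt ae be phi) / vnorm (vpt ae be phi).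
Proof.
  intros Hae Hbe. unfold Th, vpt, vnorm; cbn [fst snd].
  set (s := sin phi). set (c := cos phi).
  assert (Hsc : s ^ 2 + c ^ 2 = 1) by (unfold s, c; rewrite <- (sin2_cos2 phi); unfold Rsqr; ring).
  set (Re := be * c ^ 2 + ae * s ^ 2). set (Im := (ae - be) * s * c).
  assert (HRe : 0 < Re).
  { unfold Re. destruct (Req_dec s 0). 
    - assert (c ^ 2 = 1) by (rewrite H in Hsc; lra). rewrite H0. nra.
    - pose proof (sq_pos s H). pose proof (pow2_ge_0 c). nra. }
  set (r := sqrt ((- ae * s) ^ 2 + (be * c) ^ 2)).
  assert (Hr2 : (- ae * s) ^ 2 + (be * c) ^ 2 = Re ^ 2 + Im ^ 2).
  { unfold Re, Im. apply alg_r2; auto. }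
  assert (Hrpos : 0 < r).
  { unfold r. apply sqrt_lt_R0. rewrite Hr2. pose proof (pow2_ge_0 Im). pose proof (sq_pos Re ltac:(lra)). lra. }
  assert (Hsq : sqrt (1 + (Im / Re)²) = r / Re).
  { replace (1 + (Im / Re)²) with ((r / Re) ^ 2).
    apply sqrt_pow2. apply Rlt_le, Rdiv_lt_0_compat; auto.
    unfold r. unfold Rdiv. rewrite Rpow_mult_distr. rewrite pow2_sqrt.
    rewrite Hr2. unfold Rsqr. field. lra.
    apply Rplus_le_le_0_compat; apply pow2_ge_0. }
  set (g := atan (Im / Re)).
  assert (Cg : cos g = Re / r) by (unfold g; rewrite cos_atan, Hsq; field; lra).
  assert (Sg : sin g = Im / r) by (unfold g; rewrite sin_atan, Hsq; field; lra).
  replace (phi + PI / 2 + g) with ((phi + g) + PI / 2) by ring.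
  repeat (rewrite cos_plus || rewrite sin_plus). rewrite cos_PI2, sin_PI2, Cg, Sg.
  fold s c. fold r.
  split.
  - transitivity (-(s*Re + c*Im)/r). field; lra. unfold Re, Im. rewrite alg_c; auto. field. lra.
  - transitivity ((c*Re - s*Im)/r). field; lra. unfold Re, Im. rewrite alg_s; auto.
Qed.

Lemma vnorm_pos (P Q : point) : 0 < det2 P Q -> 0 < vnorm P /\ 0 < vnorm Q.
Proof.
  destruct P as [x1 y1], Q as [x2 y2]. unfold det2, vnorm; cbn [fst snd]. intros H.
  split; apply sqrt_lt_R0.
  - destruct (Req_dec x1 0); destruct (Req_dec y1 0).
    + subst. lra.
    + pose proof (sq_pos y1 H1). pose proof (pow2_ge_0 x1). lra.
    + pose proof (sq_pos x1 H0). pose proof (pow2_ge_0 y1). lra.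
    + pose proof (sq_pos x1 H0). pose proof (pow2_ge_0 y1). lra.
  - destruct (Req_dec x2 0); destruct (Req_dec y2 0).
    + subst. lra.
    + pose proof (sq_pos y2 H1). pose proof (pow2_ge_0 x2). lra.
    + pose proof (sq_pos x2 H0). pose proof (pow2_ge_0 y2). lra.
    + pose proof (sq_pos x2 H0). pose proof (pow2_ge_0 y2). lra.
Qed.

Lemma angle_Th ae be p1 p2 : 0 < ae -> 0 < be -> 0 < p2 - p1 < PI ->
  0 < det2 (vpt ae be p1) (vpt ae be p2) ->
  angle (vpt ae be p1) (vpt ae be p2) = Th ae be p2 - Th ae be p1.
Proof.
  intros Hae Hbe Hp Hd.
  destruct (vnorm_pos _ _ Hd) as [R1 R2].
  destruct (Th_cs ae be p1 Hae Hbe) as [C1 S1].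
  destruct (Th_cs ae be p2 Hae Hbe) as [C2 S2].
  set (P1 := vpt ae be p1) in *. set (P2 := vpt ae be p2) in *.
  set (T1 := Th ae be p1) in *. set (T2 := Th ae be p2) in *.
  assert (Hcos : (fst P1 * fst P2 + snd P1 * snd P2) / (vnorm P1 * vnorm P2) = cos (T2 - T1)).
  { rewrite cos_minus, C1, C2, S1, S2. field. lra. }
  assert (Hsin : sin (T2 - T1) = det2 P1 P2 / (vnorm P1 * vnorm P2)).
  { rewrite sin_minus, C1, C2, S1, S2. unfold det2. field. lra. }
  assert (Hs : 0 < sin (T2 - T1)).
  { rewrite Hsin. apply Rdiv_lt_0_compat; auto. apply Rmult_lt_0_compat; auto. }
  assert (Hr : - PI < T2 - T1 < 2 * PI).
  { unfold T1, T2, Th.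
    pose proof (atan_bound (((ae - be) * sin p1 * cos p1) / (be * cos p1 ^ 2 + ae * sin p1 ^ 2))).
    pose proof (atan_bound (((ae - be) * sin p2 * cos p2) / (be * cos p2 ^ 2 + ae * sin p2 ^ 2))).
    lra. }
  assert (Hr2 : 0 <= T2 - T1 <= PI).
  { split.
    - destruct (Rle_dec 0 (T2 - T1)); auto. exfalso.
      pose proof (sin_ge_0 (- (T2 - T1)) ltac:(lra) ltac:(lra)). rewrite sin_neg in H. lra.
    - destruct (Rle_dec (T2 - T1) PI); auto. exfalso.
      pose proof (sin_le_0 (T2 - T1) ltac:(lra) ltac:(lra)). lra. }
  unfold angle. rewrite Hcos. apply acos_cos. auto.
Qed.


Lemma part1 ac bc m : 0 <= m < 1 -> m ^ 2 * ac ^ 2 = ac ^ 2 - bc ^ 2 -> 0 < bc -> bc < ac ->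
  (forall ae be ke : R, 0 < ke -> 0 < ae -> 0 < be ->
     ae ^ 2 = ac ^ 2 + ke -> be ^ 2 = bc ^ 2 + ke ->
     forall du : R, 0 < du -> du < ellK m -> bc = be * cn m du ->
     forall u0 : R,
       billiard ae be ac bc (fun k : Z => param m ae be (u0 + 2 * IZR k * du)) /\
       (forall P : Z -> point, billiard ae be ac bc P ->
          P 0%Z = param m ae be u0 ->
          forall k : Z, P k = param m ae be (u0 + 2 * IZR k * du))).
Proof.
  intros Hm Hm2 Hbc Hac ae be ke Hke Hae Hbe Hae2 Hbe2 du Hdu HduK Hcn u0.
  split.
  - exact (X_billiard ac bc ae be ke du m Hm Hm2 Hbc Hac Hke Hae Hbe Hae2 Hbe2 Hdu HduK Hcn u0).
  - intros P HP H0 k.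
    apply (X_unique ac bc ae be ke du m Hm Hm2 Hbc Hac Hke Hae Hbe Hae2 Hbe2 Hdu HduK Hcn u0 P HP).
    unfold X. rewrite H0. f_equal. simpl. ring.
Qed.

Lemma am_nK m u n : 0 <= m < 1 -> am m (u + 2 * INR n * ellK m) = am m u + INR n * PI.
Proof.
  intros Hm. induction n as [|n IH].
  - simpl. replace (u + 2 * 0 * ellK m) with u by ring. ring.
  - rewrite S_INR. replace (u + 2 * (INR n + 1) * ellK m) with ((u + 2 * INR n * ellK m) + 2 * ellK m) by ring.
    rewrite am_2K; auto. rewrite IH. ring.
Qed.

Lemma Th_per ae be p n : Th ae be (p + 2 * INR n * PI) = Th ae be p + 2 * INR n * PI.
Proof. unfold Th. rewrite sin_period, cos_period. ring. Qed.

Lemma ell_surj ae be (P : point) : 0 < ae -> 0 < be -> on_ellipse ae be P -> exists phi, P = vpt ae be phi.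
Proof.
  intros Hae Hbe H. destruct P as [x y]. unfold on_ellipse in H; cbn [fst snd] in H.
  set (p := - x / ae). set (q := y / be).
  assert (Hpq : p ^ 2 + q ^ 2 = 1) by (unfold p, q; rewrite <- H; field; lra).
  assert (Hq : -1 <= q <= 1) by (pose proof (pow2_ge_0 p); split; nra).
  assert (Hs : sqrt (1 - q²) = Rabs p).
  { rewrite <- sqrt_Rsqr_abs. f_equal. unfold Rsqr. simpl in Hpq. lra. }
  destruct (Rle_dec 0 p).
  - exists (acos q). unfold vpt. rewrite sin_acos, cos_acos, Hs, Rabs_pos_eq; auto.
    unfold p, q. f_equal; field; lra.
  - exists (- acos q). unfold vpt. rewrite sin_neg, cos_neg, sin_acos, cos_acos, Hs, Rabs_left; try lra.
    unfold p, q. f_equal; field; lra.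
Qed.

Lemma param_vpt m ae be u : param m ae be u = vpt ae be (am m u).
Proof. unfold param, vpt, sn, cn. auto. Qed.

Theorem theorem2 (ac bc : R) (Hb : 0 < bc) (Hab : bc < ac) :
  let d := sqrt (ac ^ 2 - bc ^ 2) in
  let m := d / ac in
  (* Part 1 *)
  (forall ae be ke : R, 0 < ke -> 0 < ae -> 0 < be ->
     ae ^ 2 = ac ^ 2 + ke -> be ^ 2 = bc ^ 2 + ke ->
     forall du : R, 0 < du -> du < ellK m -> bc = be * cn m du ->
     forall u0 : R,
       billiard ae be ac bc (fun k : Z => param m ae be (u0 + 2 * IZR k * du)) /\
       (forall P : Z -> point, billiard ae be ac bc P ->
          P 0%Z = param m ae be u0 ->
          forall k : Z, P k = param m ae be (u0 + 2 * IZR k * du))) /\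
  (* Part 2 *)
  (forall N tau : nat, (3 <= N)%nat -> (1 <= tau)%nat -> Nat.gcd N tau = 1%nat ->
     (2 * tau < N)%nat ->
     let du := 2 * INR tau * ellK m / INR N in
     let ae := ac * dn m du / cn m du in
     let be := bc / cn m du in
     (exists ke : R, 0 < ke /\ ae ^ 2 = ac ^ 2 + ke /\ be ^ 2 = bc ^ 2 + ke) /\
     (forall P : Z -> point, billiard ae be ac bc P ->
        periodic N P /\ turning_number N tau P)).
Proof.
  intros d m.
  assert (Hac : 0 < ac) by lra.
  assert (Hd2 : d ^ 2 = ac ^ 2 - bc ^ 2) by (unfold d; rewrite pow2_sqrt; nra).
  assert (Hd0 : 0 <= d) by (unfold d; apply sqrt_pos).
  assert (Hm2 : m ^ 2 * ac ^ 2 = ac ^ 2 - bc ^ 2) by (unfold m; rewrite <- Hd2; field; lra).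
  assert (Hm : 0 <= m < 1).
  { split. unfold m. apply Rdiv_le_0_compat; lra.
    assert (m ^ 2 < 1) by (apply (Rmult_lt_reg_r (ac ^ 2)); [nra|]; rewrite Hm2; nra).
    assert (0 <= m) by (unfold m; apply Rdiv_le_0_compat; lra). nra. }
  clearbody m. clear Hd2 Hd0. clearbody d.
  split.
  { apply part1; auto. }
  intros N tau HN Ht Hg H2t du ae be.
  pose proof (K_pos m Hm) as HK.
  assert (HN0 : 3 <= INR N) by (replace 3 with (INR 3) by (simpl; ring); apply le_INR; auto).
  assert (Ht0 : 1 <= INR tau) by (replace 1 with (INR 1) by (simpl; ring); apply le_INR; auto).
  assert (H2t' : 2 * INR tau < INR N).
  { replace 2 with (INR 2) by (simpl; ring). rewrite <- mult_INR. apply lt_INR; auto. }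
  assert (Hdu : 0 < du) by (unfold du; apply Rdiv_lt_0_compat; nra).
  assert (HduK : du < ellK m).
  { unfold du. apply (Rmult_lt_reg_r (INR N)); [lra|]. unfold Rdiv. rewrite Rmult_assoc, Rinv_l by lra. nra. }
  assert (HS := S_pos du m Hm Hdu HduK).
  assert (HC := C_pos du m Hm Hdu HduK).
  pose proof (sncn m du) as Hsc. pose proof (dn_sq m Hm du) as HD2. pose proof (dn_pos m Hm du) as HD.
  assert (HC1 : cn m du < 1) by nra.
  assert (Hae : 0 < ae) by (unfold ae; apply Rdiv_lt_0_compat; nra).
  assert (Hbe : 0 < be) by (unfold be; apply Rdiv_lt_0_compat; nra).
  assert (Hcn : bc = be * cn m du) by (unfold be; field; lra).
  set (ke := be ^ 2 - bc ^ 2).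
  assert (Hbe2 : be ^ 2 = bc ^ 2 + ke) by (unfold ke; ring).
  assert (Hke : 0 < ke).
  { unfold ke, be. replace ((bc / cn m du) ^ 2 - bc ^ 2) with (bc ^ 2 * (1 - cn m du ^ 2) / cn m du ^ 2) by (field; lra).
    assert (0 < cn m du ^ 2) by nra. assert (0 < 1 - cn m du ^ 2) by nra. assert (0 < bc ^ 2) by nra.
    apply Rdiv_lt_0_compat; [apply Rmult_lt_0_compat|]; auto. }
  assert (Hae2 : ae ^ 2 = ac ^ 2 + ke).
  { unfold ke, ae, be.
    replace ((ac * dn m du / cn m du) ^ 2) with (ac ^ 2 * dn m du ^ 2 / cn m du ^ 2) by (field; lra).
    replace ((bc / cn m du) ^ 2) with (bc ^ 2 / cn m du ^ 2) by (field; lra).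
    rewrite HD2. replace (sn m du ^ 2) with (1 - cn m du ^ 2) by lra.
    apply (Rmult_eq_reg_r (cn m du ^ 2)); [| nra].
    field_simplify; [| lra | lra]. nra. }
  split.
  { exists ke. auto. }
  intros P HP.
  destruct (ell_surj ae be (P 0%Z) Hae Hbe (proj1 HP 0%Z)) as [phi Hphi].
  set (u0 := ellF m phi).
  assert (H0 : P 0%Z = param m ae be u0) by (rewrite param_vpt; unfold u0; rewrite am_ellF; auto).
  destruct (part1 ac bc m Hm Hm2 Hb Hab ae be ke Hke Hae Hbe Hae2 Hbe2 du Hdu HduK Hcn u0) as [_ Hu].
  pose proof (Hu P HP H0) as Hall.
  assert (H4 : forall x, am m (x + 2 * INR N * du) = am m x + 2 * INR tau * PI).
  { intros x. replace (x + 2 * INR N * du) with (x + 2 * INR (2 * tau) * ellK m).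
    rewrite am_nK; auto. rewrite mult_INR. simpl (INR 2). ring.
    unfold du. rewrite mult_INR. simpl (INR 2). field. lra. }
  split.
  - intros i. rewrite !Hall, !param_vpt.
    rewrite plus_IZR, <- INR_IZR_INZ.
    replace (u0 + 2 * (IZR i + INR N) * du) with ((u0 + 2 * IZR i * du) + 2 * INR N * du) by ring.
    rewrite H4. unfold vpt. rewrite sin_period, cos_period. auto.
  - unfold turning_number.
    assert (SW : forall n, swept P n = Th ae be (am m (u0 + 2 * INR n * du)) - Th ae be (am m u0)).
    { induction n as [|n IH].
      - simpl. replace (u0 + 2 * 0 * du) with u0 by ring. ring.
      - simpl swept. rewrite IH.
        destruct HP as [_ [_ [_ Hdet]]]. pose proof (Hdet (Z.of_nat n)) as Dn.
        rewrite !Hall, !param_vpt in Dn. rewrite !Hall, !param_vpt.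
        rewrite plus_IZR, <- !INR_IZR_INZ in *.
        replace (u0 + 2 * (INR n + 1) * du) with ((u0 + 2 * INR n * du) + 2 * du) in * by ring.
        rewrite angle_Th; auto.
        + rewrite S_INR. replace (u0 + 2 * (INR n + 1) * du) with ((u0 + 2 * INR n * du) + 2 * du) by ring. ring.
        + split.
          * pose proof (am_strict m Hm (u0 + 2 * INR n * du) (u0 + 2 * INR n * du + 2 * du) ltac:(lra)). lra.
          * pose proof (am_strict m Hm (u0 + 2 * INR n * du + 2 * du) (u0 + 2 * INR n * du + 2 * ellK m) ltac:(lra)).
            rewrite am_2K in H; auto. lra. }
    rewrite SW. rewrite H4. rewrite Th_per. ring.
Qed.
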